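(* Let $0<\varepsilon<\tfrac13$, put $\delta=\dfrac{1+\varepsilon}{((1+\varepsilon)L)^{1/\varepsilon}}$, and run $\textsc{Approx}(\varepsilon,\delta)$. Then the following hold. (i) The number of iterations satisfies $\tau\le m\left\lceil\log_{1+\varepsilon}\frac{1+\varepsilon}{\delta}\right\rceil$. (ii) The scaled flow $x_\tau/\log_{1+\varepsilon}\frac{1+\varepsilon}{\delta}$ is a feasible $L$-bounded flow. (iii) The value of this scaled flow is at least $\beta/(1+3\varepsilon)$.
   Context: Let $G=(V,E)$ be a finite directed graph with $m=|E|$, capacities $c:E\to\mathbb{R}_{>0}$, distinct vertices $s,t\in V$, and a positive integer $L$. Let $\mathcal{P}_L$ be the set of directed simple $s$-$t$ paths with at most $L$ edges, and assume $\mathcal{P}_L\neq\emptyset$. An $L$-bounded flow is a function $x:\mathcal{P}_L\to\mathbb{R}_{\ge0}$, with value $\sum_{P}x(P)$. It is feasible if $\sum_{P\ni e}x(P)\le c(e)$ for all $e\in E$. For $y:E\to\mathbb{R}_{\ge0}$ write $y(P)=\sum_{e\in P}y(e)$ and $d^L_y(s,t)=\min_{P\in\mathcal{P}_L}y(P)$. Let $\beta$ be the optimal value of the LP $\min\{\sum_{e\in E}c(e)y(e): y\ge 0,\ y(P)\ge1\ \forall P\in\mathcal{P}_L\}$; by LP duality, $\beta$ equals the maximum value of a feasible $L$-bounded flow. Logarithms without base are natural. Algorithm $\textsc{Approx}(\varepsilon,\delta)$ (parameters $\varepsilon>0,\delta>0$): - Initialize $i=0$, $y_0(e)=\delta$ for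 all $e$, and $x_0\equiv0$. Let $\alpha^L(i)=d^L_{y_i}(s,t)$. - While $\alpha^L(i)<1$: - set $i\leftarrow i+1$; - choose $P_i\in\mathcal{P}_L$ minimizing $y_{i-1}(P)$, with ties broken arbitrarily; - let $c_i=\min_{e\in P_i}c(e)$; - set $x_i=x_{i-1}$ except $x_i(P_i)=x_{i-1}(P_i)+c_i$; - set $y_i(e)=y_{i-1}(e)(1+\varepsilon c_i/c(e))$ for $e\in P_i$, and $y_i(e)=y_{i-1}(e)$ otherwise. - Return $x_i$. $\tau$ denotes the number of iterations performed, and $f_i=\sum_{P}x_i(P)$. *)

(* Defs.v *)
From Stdlib Require Import Reals List.
Import ListNotations.
Open Scope R_scope.

(* Graph: edges are 0..m-1, edge e goes from vertex (tl e) to vertex (hd e);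
   vertices are natural numbers.  Paths are lists of edges. *)

Fixpoint is_walk (m : nat) (tl hd : nat -> nat) (u t : nat) (p : list nat) : Prop :=
  match p with
  | nil => u = t
  | e :: p' => (e < m)%nat /\ tl e = u /\ is_walk m tl hd (hd e) t p'
  end.

Definition is_Lpath (m : nat) (tl hd : nat -> nat) (s t L : nat) (p : list nat) : Prop :=
  is_walk m tl hd s t p /\ NoDup (s :: map hd p) /\ (length p <= L)%nat.

Fixpoint path_len (y : nat -> R) (p : list nat) : R :=
  match p with
  | nil => 0
  | e :: p' => y e + path_len y p'
  end.

Definition is_dL (m : nat) (tl hd : nat -> nat) (s t L : nat) (y : nat -> R) (d : R) : Prop :=
  (exists P, is_Lpath m tl hd s t L P /\ path_len y P = d) /\
  (forall Q, is_Lpath m tl hd s t L Q -> d <= path_len y Q).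

Fixpoint sum_nat (n : nat) (f : nat -> R) : R :=
  match n with
  | O => 0
  | S n' => sum_nat n' f + f n'
  end.

Definition LP_feasible (m : nat) (tl hd : nat -> nat) (s t L : nat) (y : nat -> R) : Prop :=
  (forall e, (e < m)%nat -> 0 <= y e) /\
  (forall P, is_Lpath m tl hd s t L P -> 1 <= path_len y P).

Definition LP_cost (m : nat) (c : nat -> R) (y : nat -> R) : R :=
  sum_nat m (fun e => c e * y e).

Definition LP_opt (m : nat) (tl hd : nat -> nat) (c : nat -> R) (s t L : nat) (beta : R) : Prop :=
  (exists y, LP_feasible m tl hd s t L y /\ LP_cost m c y = beta) /\
  (forall y, LP_feasible m tl hd s t L y -> beta <= LP_cost m c y).

Definition is_min_cap (c : nat -> R) (P : list nat) (c0 : R) : Prop :=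
  (exists e, In e P /\ c e = c0) /\ (forall e, In e P -> c0 <= c e).

(* An L-bounded flow is represented as a finite list of (path, amount) pairs;
   x(P) is the sum of the amounts recorded for P (0 if P does not occur). *)
Definition flow := list (list nat * R).

Definition flow_value (x : flow) : R :=
  fold_right (fun pa acc => snd pa + acc) 0 x.

Definition edge_load (x : flow) (e : nat) : R :=
  fold_right (fun pa acc =>
     (if in_dec Nat.eq_dec e (fst pa) then snd pa else 0) + acc) 0 x.

Definition scale_flow (x : flow) (k : R) : flow :=
  map (fun pa => (fst pa, snd pa / k)) x.

Definition feasible_Lflow (m : nat) (tl hd : nat -> nat) (c : nat -> R) (s t L : nat)
    (x : flow) : Prop :=
  (forall pa, In pa x -> is_Lpath m tl hd s t L (fst pa) /\ 0 <= snd pa) /\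
  (forall e, (e < m)%nat -> edge_load x e <= c e).

Definition logb (b z : R) : R := ln z / ln b.

Definition Rceil (x : R) : Z := (1 - up (- x))%Z.

(* Main.v *)
Require Import Defs.
From Stdlib Require Import Reals List Lra Lia.
Require Import Defs.
Import ListNotations.
Open Scope R_scope.

Lemma walk_lt m tl hd u t p : is_walk m tl hd u t p -> forall e, In e p -> (e < m)%nat.
Proof.
  revert u; induction p as [|a p IH]; simpl; intros u H e He; [contradiction|].
  destruct H as [Ha [_ Hw]]. destruct He as [<-|He]; [exact Ha| exact (IH _ Hw e He)].
Qed.

Lemma Lpath_lt m tl hd s t L p : is_Lpath m tl hd s t L p -> forall e, In e p -> (e < m)%nat.
Proof. intros [H _]; exact (walk_lt _ _ _ _ _ _ H). Qed.

Lemma Lpath_nodup m tl hd s t L p : is_Lpath m tl hd s t L p -> NoDup p.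
Proof.
  intros [_ [H _]]. apply NoDup_cons_iff in H. destruct H as [_ H].
  exact (NoDup_map_inv _ _ H).
Qed.

Lemma sum_nat_ext n (f g : nat -> R) : (forall e, (e < n)%nat -> f e = g e) -> sum_nat n f = sum_nat n g.
Proof. induction n; simpl; intros H; auto. rewrite IHn by (intros; apply H; lia). rewrite (H n) by lia; auto. Qed.

Lemma sum_nat_plus n (f g : nat -> R) : sum_nat n (fun e => f e + g e) = sum_nat n f + sum_nat n g.
Proof. induction n; simpl; [lra|]. rewrite IHn; lra. Qed.

Lemma sum_nat_minus n (f g : nat -> R) : sum_nat n (fun e => f e - g e) = sum_nat n f - sum_nat n g.
Proof. induction n; simpl; [lra|]. rewrite IHn; lra. Qed.

Lemma sum_nat_scal n k (f : nat -> R) : sum_nat n (fun e => k * f e) = k * sum_nat n f.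
Proof. induction n; simpl; [lra|]. rewrite IHn; lra. Qed.

Lemma sum_nat_const n k : sum_nat n (fun _ => k) = INR n * k.
Proof. induction n; simpl sum_nat; [simpl; lra|]. rewrite IHn, S_INR; lra. Qed.

Lemma sum_nat_le n (f g : nat -> R) : (forall e, (e < n)%nat -> f e <= g e) -> sum_nat n f <= sum_nat n g.
Proof. induction n; simpl; intros H; [lra|]. pose proof (H n ltac:(lia)). pose proof (IHn ltac:(intros; apply H; lia)). lra. Qed.

Lemma sum_nat_le_plus n (f g : nat -> R) e0 k : (forall e, (e < n)%nat -> f e <= g e) -> (e0 < n)%nat ->
  f e0 + k <= g e0 -> sum_nat n f + k <= sum_nat n g.
Proof.
  induction n; simpl; intros H He0 Hk; [lia|].
  destruct (Nat.eq_dec e0 n) as [->|Hne].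
  - pose proof (sum_nat_le n f g ltac:(intros; apply H; lia)). lra.
  - pose proof (IHn ltac:(intros; apply H; lia) ltac:(lia) Hk). pose proof (H n ltac:(lia)). lra.
Qed.

Lemma sum_nat_delta n a (h : nat -> R) : (a < n)%nat -> sum_nat n (fun e => if Nat.eq_dec e a then h e else 0) = h a.
Proof.
  induction n; simpl; intros Ha; [lia|].
  destruct (Nat.eq_dec n a) as [->|Hne].
  - rewrite (sum_nat_ext _ _ (fun _ => 0)). rewrite sum_nat_const; lra.
    intros e He. destruct (Nat.eq_dec e a); [lia|auto].
  - rewrite IHn by lia. lra.
Qed.

Lemma sum_in_path m (h : nat -> R) P : NoDup P -> (forall e, In e P -> (e < m)%nat) ->
  sum_nat m (fun e => if in_dec Nat.eq_dec e P then h e else 0) = path_len h P.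
Proof.
  induction P as [|a P IH]; intros Hnd Hlt; cbn [path_len].
  - rewrite (sum_nat_ext _ _ (fun _ => 0)) by (intros; destruct in_dec; [contradiction|auto]).
    rewrite sum_nat_const; lra.
  - apply NoDup_cons_iff in Hnd. destruct Hnd as [Ha Hnd].
    rewrite (sum_nat_ext _ _ (fun e => (if Nat.eq_dec e a then h e else 0) +
               (if in_dec Nat.eq_dec e P then h e else 0))).
    + rewrite sum_nat_plus, sum_nat_delta, IH; auto.
      * intros; apply Hlt; simpl; auto.
      * apply Hlt; simpl; auto.
    + intros e _. destruct (in_dec Nat.eq_dec e (a :: P)) as [Hi|Hi];
      destruct (Nat.eq_dec e a) as [E|E]; destruct (in_dec Nat.eq_dec e P) as [Hj|Hj]; try lra.
      all: try (subst; tauto); try (exfalso; apply Hi; (left; congruence) || (right; auto)).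
      simpl in Hi; destruct Hi as [Hi|Hi]; [congruence|tauto].
Qed.

Lemma path_len_scal k (y : nat -> R) P : path_len (fun e => k * y e) P = k * path_len y P.
Proof. induction P; simpl; [lra|]. rewrite IHP; lra. Qed.

Lemma path_len_div k (y : nat -> R) P : path_len (fun e => y e / k) P = path_len y P / k.
Proof. induction P; simpl; unfold Rdiv; [lra|]. unfold Rdiv in IHP; rewrite IHP; lra. Qed.

Lemma path_len_minus k (y : nat -> R) P : path_len (fun e => y e - k) P = path_len y P - k * INR (length P).
Proof. induction P; simpl length; simpl path_len; [simpl; lra|]. rewrite IHP, S_INR; lra. Qed.

Lemma path_len_nonneg (y : nat -> R) P : (forall e, In e P -> 0 <= y e) -> 0 <= path_len y P.
Proof. induction P; simpl; intros H; [lra|]. pose proof (H a (or_introl eq_refl)). pose proof (IHP ltac:(auto)). lra. Qed.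

Lemma path_len_ge_elem (y : nat -> R) P e : In e P -> (forall e, In e P -> 0 <= y e) -> y e <= path_len y P.
Proof.
  induction P; simpl; intros He H; [contradiction|].
  destruct He as [<-|He].
  - pose proof (path_len_nonneg y P ltac:(auto)). lra.
  - pose proof (H a (or_introl eq_refl)). pose proof (IHP He ltac:(auto)). lra.
Qed.

Lemma flow_value_app1 x pa : flow_value (x ++ [pa]) = flow_value x + snd pa.
Proof. induction x; unfold flow_value in *; simpl; [lra|]. rewrite IHx; lra. Qed.

Lemma edge_load_app1 x pa e : edge_load (x ++ [pa]) e = edge_load x e +
  (if in_dec Nat.eq_dec e (fst pa) then snd pa else 0).
Proof. induction x; unfold edge_load in *; simpl; [lra|]. rewrite IHx; lra. Qed.

Lemma flow_value_scale x k : flow_value (scale_flow x k) = flow_value x / k.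
Proof. induction x; unfold flow_value, scale_flow in *; simpl; unfold Rdiv in *; [lra|]. rewrite IHx; lra. Qed.

Lemma edge_load_scale x k e : edge_load (scale_flow x k) e = edge_load x e / k.
Proof.
  induction x; unfold edge_load, scale_flow in *; simpl; unfold Rdiv in *; [lra|]. rewrite IHx.
  destruct (in_dec Nat.eq_dec e (fst a)); lra.
Qed.

Lemma in_scale x k pa : In pa (scale_flow x k) -> exists pb, In pb x /\ pa = (fst pb, snd pb / k).
Proof. unfold scale_flow; intros H. apply in_map_iff in H. destruct H as [pb [<- H]]. eauto. Qed.

Lemma ln_le_xm1 x : 0 < x -> ln x <= x - 1.
Proof. intros Hx. pose proof (exp_ineq1_le (ln x)). rewrite exp_ln in H; lra. Qed.

Lemma ln_le_mono x y : 0 < x -> x <= y -> ln x <= ln y.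
Proof. intros Hx Hy. destruct (Req_dec x y) as [->|Hne]; [lra|]. left; apply ln_increasing; lra. Qed.

Lemma ln_ge x : 0 < x -> 1 - / x <= ln x.
Proof.
  intros Hx. pose proof (ln_le_xm1 (/ x) ltac:(apply Rinv_0_lt_compat; lra)).
  rewrite ln_Rinv in H; lra.
Qed.

Lemma wamgm eps a : 0 < eps -> 0 <= a <= 1 -> a * ln (1 + eps) <= ln (1 + eps * a).
Proof.
  intros He Ha. set (M := 1 + eps * a).
  assert (HM : 0 < M) by (unfold M; nra).
  pose proof (ln_le_xm1 ((1 + eps) / M) ltac:(apply Rdiv_lt_0_compat; lra)) as H1.
  pose proof (ln_le_xm1 (/ M) ltac:(apply Rinv_0_lt_compat; lra)) as H2.
  unfold Rdiv in H1. rewrite ln_mult in H1 by (try apply Rinv_0_lt_compat; lra).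
  rewrite ln_Rinv in H1, H2 by lra.
  assert (E : a * ((1 + eps) * / M - 1) + (1 - a) * (/ M - 1) = 0).
  { unfold M; field; unfold M in HM; lra. }
  nra.
Qed.
Lemma LP_lower m tl hd c s t L beta (y : nat -> R) g :
  LP_opt m tl hd c s t L beta -> 0 < g -> (forall e, (e < m)%nat -> 0 <= y e) ->
  (forall Q, is_Lpath m tl hd s t L Q -> g <= path_len y Q) -> beta * g <= LP_cost m c y.
Proof.
  intros [_ Hopt] Hg Hy HQ.
  assert (Hf : LP_feasible m tl hd s t L (fun e => y e / g)).
  { split.
    - intros e He. unfold Rdiv. apply Rmult_le_pos; [auto|left; apply Rinv_0_lt_compat; lra].
    - intros P HPl. rewrite path_len_div. apply (Rmult_le_reg_r g); [lra|].
      unfold Rdiv. rewrite Rmult_assoc, Rinv_l by lra. specialize (HQ P HPl). lra. }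
  specialize (Hopt _ Hf). unfold LP_cost in *.
  rewrite (sum_nat_ext _ _ (fun e => / g * (c e * y e))) in Hopt by (intros; unfold Rdiv; ring).
  rewrite sum_nat_scal in Hopt.
  apply (Rmult_le_compat_r g) in Hopt; [|lra].
  replace (/ g * sum_nat m (fun e => c e * y e) * g) with (sum_nat m (fun e => c e * y e)) in Hopt
    by (field; lra). lra.
Qed.

Lemma LP_cost_nonneg m (c y : nat -> R) : (forall e, (e < m)%nat -> 0 < c e) ->
  (forall e, (e < m)%nat -> 0 <= y e) -> 0 <= LP_cost m c y.
Proof.
  intros Hc Hy. unfold LP_cost.
  pose proof (sum_nat_le m (fun _ => 0) (fun e => c e * y e)) as H.
  rewrite sum_nat_const in H. assert (INR m * 0 = 0) by ring.
  assert (forall e, (e < m)%nat -> 0 <= c e * y e).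
  { intros e He. apply Rmult_le_pos; [left; auto|auto]. }
  specialize (H H1). lra.
Qed.

Lemma beta_nonneg m tl hd c s t L beta : (forall e, (e < m)%nat -> 0 < c e) ->
  LP_opt m tl hd c s t L beta -> 0 <= beta.
Proof.
  intros Hc [[y [[Hy _] Hb]] _]. rewrite <- Hb. apply LP_cost_nonneg; auto.
Qed.

Lemma g_lemma m tl hd c s t L beta (y : nat -> R) delta g :
  (forall e, (e < m)%nat -> 0 < c e) ->
  LP_opt m tl hd c s t L beta -> 0 < beta -> 0 < delta ->
  (forall e, (e < m)%nat -> delta <= y e) ->
  (forall Q, is_Lpath m tl hd s t L Q -> g <= path_len y Q) ->
  g * beta <= INR L * delta * beta + LP_cost m c (fun e => y e - delta).
Proof.
  intros Hc Hopt Hb Hd Hy HQ.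
  assert (Hnn : 0 <= LP_cost m c (fun e => y e - delta)).
  { apply LP_cost_nonneg; auto. intros e He; specialize (Hy e He); lra. }
  destruct (Rle_dec (g - INR L * delta) 0) as [Hle|Hgt].
  - nra.
  - assert (H := LP_lower m tl hd c s t L beta (fun e => y e - delta) (g - INR L * delta) Hopt
                  ltac:(lra) ltac:(intros e He; specialize (Hy e He); lra)).
    assert (Hq : forall Q, is_Lpath m tl hd s t L Q -> g - INR L * delta <= path_len (fun e => y e - delta) Q).
    { intros Q HQl. rewrite path_len_minus. specialize (HQ Q HQl).
      destruct HQl as [_ [_ Hlen]]. apply le_INR in Hlen. nra. }
    specialize (H Hq). nra.
Qed.
Lemma invariant m tl hd c s t L eps beta (ys : nat -> nat -> R) (Ps : nat -> list nat)
  (cs : nat -> R) (xs : nat -> flow) tau delta :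
    (forall e, (e < m)%nat -> 0 < c e) ->
    0 < eps ->
    LP_opt m tl hd c s t L beta ->
    0 < delta < 1 + eps ->
    (forall e, (e < m)%nat -> ys O e = delta) ->
    xs O = nil ->
    (forall i, (i < tau)%nat ->
       (exists a, is_dL m tl hd s t L (ys i) a /\ a < 1) /\
       is_Lpath m tl hd s t L (Ps (S i)) /\
       (forall Q, is_Lpath m tl hd s t L Q ->
          path_len (ys i) (Ps (S i)) <= path_len (ys i) Q) /\
       is_min_cap c (Ps (S i)) (cs (S i)) /\
       xs (S i) = xs i ++ [(Ps (S i), cs (S i))] /\
       (forall e, (e < m)%nat ->
          ys (S i) e = if in_dec Nat.eq_dec e (Ps (S i))
                       then ys i e * (1 + eps * cs (S i) / c e)
                       else ys i e)) ->
  forall i, (i <= tau)%nat ->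
    (forall e, (e < m)%nat -> delta <= ys i e < 1 + eps) /\
    (forall e, (e < m)%nat -> ln (1 + eps) * edge_load (xs i) e / c e <= ln (ys i e) - ln delta) /\
    INR i * ln (1 + eps) + INR m * ln delta <= sum_nat m (fun e => ln (ys i e)) /\
    (forall pa, In pa (xs i) -> is_Lpath m tl hd s t L (fst pa) /\ 0 <= snd pa) /\
    0 <= flow_value (xs i) /\
    (0 < beta -> INR L * delta * beta + LP_cost m c (fun e => ys i e - delta) <=
                 INR L * delta * beta * exp (eps * flow_value (xs i) / beta)).
Proof.
  intros Hc Heps Hopt Hd Hy0 Hx0 Hstep.
  assert (Hl1 : 0 < ln (1 + eps)) by (rewrite <- ln_1; apply ln_increasing; lra).
  induction i as [|i IH]; intros Hi.
  - rewrite Hx0. split; [|split; [|split; [|split; [|split]]]].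
    + intros e He; rewrite Hy0 by auto; lra.
    + intros e He. rewrite Hy0 by auto. unfold edge_load; simpl. unfold Rdiv; lra.
    + rewrite (sum_nat_ext _ _ (fun _ => ln delta)) by (intros; rewrite Hy0; auto).
      rewrite sum_nat_const. simpl; lra.
    + intros pa [].
    + unfold flow_value; simpl; lra.
    + intros Hb. unfold LP_cost. rewrite (sum_nat_ext _ _ (fun _ => 0)).
      * unfold flow_value; simpl. rewrite sum_nat_const. unfold Rdiv. rewrite !Rmult_0_r, Rmult_0_l, exp_0; lra.
      * intros e He; rewrite Hy0 by auto; ring.
  - destruct (IH ltac:(lia)) as [I1 [I2 [I3 [I4 [I5 I6]]]]]; clear IH.
    destruct (Hstep i ltac:(lia)) as [[a [[[P0 [HP0 HP0a]] HP0min] Ha1]] [HPl [Hmin [[[e0 [He0 Hce0]] Hcap] [Hx Hupd]]]]].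
    set (P := Ps (S i)) in *. set (cc := cs (S i)) in *. set (y := ys i) in *.
    assert (HPlt := Lpath_lt _ _ _ _ _ _ _ HPl).
    assert (HPnd := Lpath_nodup _ _ _ _ _ _ _ HPl).
    assert (Hcc : 0 < cc) by (rewrite <- Hce0; apply Hc, HPlt, He0).
    assert (Hal : path_len y P < 1) by (specialize (Hmin P0 HP0); lra).
    assert (HyP : forall e, In e P -> y e < 1).
    { intros e He. eapply Rle_lt_trans; [apply path_len_ge_elem; [exact He|]|exact Hal].
      intros e' He'. specialize (I1 e' (HPlt e' He')); lra. }
    assert (Hfrac : forall e, In e P -> 0 < cc / c e <= 1).
    { intros e He. pose proof (Hc e (HPlt e He)). pose proof (Hcap e He).
      split; [apply Rdiv_lt_0_compat; lra|]. apply (Rmult_le_reg_r (c e)); [lra|].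
      unfold Rdiv; rewrite Rmult_assoc, Rinv_l by lra; lra. }
    assert (Hupd' : forall e, (e < m)%nat -> ys (S i) e =
              if in_dec Nat.eq_dec e P then y e * (1 + eps * (cc / c e)) else y e).
    { intros e He. rewrite Hupd by auto. destruct in_dec; auto. unfold Rdiv; ring_simplify; auto. }
    assert (Hmono : forall e, (e < m)%nat -> y e <= ys (S i) e).
    { intros e He. rewrite Hupd' by auto. destruct in_dec as [Hin|]; [|lra].
      pose proof (Hfrac e Hin). specialize (I1 e He).
      assert (0 <= eps * (cc / c e)) by nra. nra. }
    split; [|split; [|split; [|split; [|split]]]].
    + intros e He. pose proof (Hmono e He). split; [specialize (I1 e He); lra|].
      rewrite Hupd' by auto. destruct in_dec as [Hin|]; [|apply I1; auto].
      pose proof (Hfrac e Hin). pose proof (HyP e Hin). specialize (I1 e He).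
      assert (y e * (1 + eps * (cc / c e)) <= y e * (1 + eps)).
      { apply Rmult_le_compat_l; [lra|]. nra. }
      assert (y e * (1 + eps) < 1 * (1 + eps)) by (apply Rmult_lt_compat_r; lra). lra.
    + intros e He. rewrite Hx, edge_load_app1. simpl fst; simpl snd.
      specialize (I2 e He). rewrite Hupd' by auto. pose proof (Hc e He).
      destruct in_dec as [Hin|].
      * pose proof (Hfrac e Hin). specialize (I1 e He).
        rewrite ln_mult by nra.
        pose proof (wamgm eps (cc / c e) Heps ltac:(lra)).
        replace (ln (1 + eps) * (edge_load (xs i) e + cc) / c e) with
           (ln (1 + eps) * edge_load (xs i) e / c e + cc / c e * ln (1 + eps)) by (field; lra).
        lra.
      * rewrite Rplus_0_r; auto.
    + rewrite S_INR.
      assert (H := sum_nat_le_plus m (fun e => ln (y e)) (fun e => ln (ys (S i) e)) e0 (ln (1 + eps))).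
      assert (Hs : sum_nat m (fun e => ln (y e)) + ln (1 + eps) <= sum_nat m (fun e => ln (ys (S i) e))).
      { apply H.
        - intros e He. apply ln_le_mono; [specialize (I1 e He); lra|auto].
        - apply HPlt, He0.
        - rewrite Hupd' by (apply HPlt, He0). destruct in_dec as [_|Hn]; [|contradiction].
          rewrite Hce0. replace (cc / cc) with 1 by (field; lra).
          rewrite Rmult_1_r, ln_mult; [lra| |lra]. specialize (I1 e0 (HPlt _ He0)); lra. }
      lra.
    + intros pa Hpa. rewrite Hx in Hpa. apply in_app_or in Hpa. destruct Hpa as [Hpa|[<-|[]]]; auto.
      simpl; split; [exact HPl|lra].
    + rewrite Hx, flow_value_app1; simpl snd; lra.
    + intros Hb. specialize (I6 Hb).
      assert (Hcost : LP_cost m c (fun e => ys (S i) e - delta) =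
                      LP_cost m c (fun e => y e - delta) + eps * cc * path_len y P).
      { unfold LP_cost. rewrite <- path_len_scal, <- (sum_in_path m _ P HPnd HPlt), <- sum_nat_plus.
        apply sum_nat_ext. intros e He. rewrite Hupd' by auto. pose proof (Hc e He).
        destruct in_dec; [field; lra|ring]. }
      assert (Hg := g_lemma m tl hd c s t L beta y delta (path_len y P) Hc Hopt Hb ltac:(lra)
                     ltac:(intros e He; apply I1; auto) Hmin).
      rewrite Hcost, Hx, flow_value_app1. simpl snd.
      set (T := INR L * delta * beta + LP_cost m c (fun e => y e - delta)) in *.
      assert (HT : T * (1 + eps * cc / beta) <= T * exp (eps * cc / beta)).
      { apply Rmult_le_compat_l; [|apply exp_ineq1_le].
        pose proof (LP_cost_nonneg m c (fun e => y e - delta) Hc ltac:(intros e He; specialize (I1 e He); lra)).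
        pose proof (pos_INR L). unfold T.
        assert (0 <= INR L * delta * beta) by (apply Rmult_le_pos; [apply Rmult_le_pos|]; lra). lra. }
      assert (HT2 : T + eps * cc * path_len y P <= T * (1 + eps * cc / beta)).
      { replace (T * (1 + eps * cc / beta)) with (T + eps * cc * (T / beta)) by (field; lra).
        assert (path_len y P <= T / beta).
        { apply (Rmult_le_reg_r beta); [lra|]. unfold Rdiv; rewrite Rmult_assoc, Rinv_l by lra. lra. }
        assert (eps * cc * path_len y P <= eps * cc * (T / beta)) by (apply Rmult_le_compat_l; nra).
        lra. }
      replace (eps * (flow_value (xs i) + cc) / beta) with (eps * flow_value (xs i) / beta + eps * cc / beta)
        by (field; lra).
      rewrite exp_plus.
      assert (T * exp (eps * cc / beta) <= INR L * delta * beta * exp (eps * flow_value (xs i) / beta) * exp (eps * cc / beta)).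
      { apply Rmult_le_compat_r; [left; apply exp_pos|exact I6]. }
      unfold T in *. lra.
Qed.
Theorem mainTheorem2 :
  forall (m : nat) (tl hd : nat -> nat) (c : nat -> R) (s t L : nat)
         (eps beta : R)
         (ys : nat -> nat -> R) (Ps : nat -> list nat) (cs : nat -> R)
         (xs : nat -> flow) (tau : nat),
    (forall e, (e < m)%nat -> 0 < c e) ->
    (forall e1 e2, (e1 < m)%nat -> (e2 < m)%nat ->
       tl e1 = tl e2 -> hd e1 = hd e2 -> e1 = e2) ->
    s <> t ->
    (1 <= L)%nat ->
    (exists P, is_Lpath m tl hd s t L P) ->
    0 < eps < 1/3 ->
    LP_opt m tl hd c s t L beta ->
    let delta := (1 + eps) / Rpower ((1 + eps) * INR L) (1 / eps) in
    (forall e, (e < m)%nat -> ys O e = delta) ->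
    xs O = nil ->
    (forall i, (i < tau)%nat ->
       (exists a, is_dL m tl hd s t L (ys i) a /\ a < 1) /\
       is_Lpath m tl hd s t L (Ps (S i)) /\
       (forall Q, is_Lpath m tl hd s t L Q ->
          path_len (ys i) (Ps (S i)) <= path_len (ys i) Q) /\
       is_min_cap c (Ps (S i)) (cs (S i)) /\
       xs (S i) = xs i ++ [(Ps (S i), cs (S i))] /\
       (forall e, (e < m)%nat ->
          ys (S i) e = if in_dec Nat.eq_dec e (Ps (S i))
                       then ys i e * (1 + eps * cs (S i) / c e)
                       else ys i e)) ->
    INR tau <= INR m * IZR (Rceil (logb (1 + eps) ((1 + eps) / delta))) /\
    ((exists a, is_dL m tl hd s t L (ys tau) a /\ 1 <= a) ->
       feasible_Lflow m tl hd c s t L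
         (scale_flow (xs tau) (logb (1 + eps) ((1 + eps) / delta))) /\
       beta / (1 + 3 * eps) <=
         flow_value (scale_flow (xs tau) (logb (1 + eps) ((1 + eps) / delta)))).
Proof.
  intros m tl hd c s t L eps beta ys Ps cs xs tau Hc Hinj Hst HL HP Heps Hopt delta Hy0 Hx0 Hstep.
  set (K := (1 + eps) * INR L).
  assert (HL1 : 1 <= INR L) by (apply (le_INR 1); auto).
  assert (HK : 1 < K) by (unfold K; nra).
  assert (HlnK : 0 < ln K) by (rewrite <- ln_1; apply ln_increasing; lra).
  assert (Hl1 : 0 < ln (1 + eps)) by (rewrite <- ln_1; apply ln_increasing; lra).
  set (l1 := ln (1 + eps)) in *.
  set (RP := Rpower K (1 / eps)).
  assert (HRP : RP = exp (ln K / eps)) by (unfold RP, Rpower; f_equal; unfold Rdiv; ring).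
  assert (HRP1 : 1 < RP).
  { rewrite HRP, <- exp_0. apply exp_increasing. apply Rdiv_lt_0_compat; lra. }
  assert (Hdpos : 0 < delta) by (unfold delta; fold K; fold RP; apply Rdiv_lt_0_compat; lra).
  assert (Hdlt : delta < 1 + eps).
  { unfold delta; fold K; fold RP. apply (Rmult_lt_reg_r RP); [lra|].
    unfold Rdiv; rewrite Rmult_assoc, Rinv_l by lra. nra. }
  assert (Hlnd : ln delta = l1 - ln K / eps).
  { unfold delta; fold K; fold RP. unfold Rdiv. rewrite ln_mult, ln_Rinv, HRP, ln_exp by
      (try apply Rinv_0_lt_compat; lra). unfold l1, Rdiv; ring. }
  set (Dv := logb (1 + eps) ((1 + eps) / delta)).
  assert (HDv : Dv = (ln K / eps) / l1).
  { unfold Dv, logb. fold l1. f_equal. unfold Rdiv at 1.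
    rewrite ln_mult, ln_Rinv, Hlnd by (try apply Rinv_0_lt_compat; lra). fold l1. ring. }
  assert (HDvpos : 0 < Dv) by (rewrite HDv; apply Rdiv_lt_0_compat; [apply Rdiv_lt_0_compat|]; lra).
  destruct (invariant m tl hd c s t L eps beta ys Ps cs xs tau delta Hc ltac:(lra) Hopt
              ltac:(lra) Hy0 Hx0 Hstep tau (Nat.le_refl _)) as [I1 [I2 [I3 [I4 [I5 I6]]]]].
  fold l1 in I2, I3.
  split.
  -
    assert (Hsum : sum_nat m (fun e => ln (ys tau e)) <= INR m * l1).
    { rewrite <- sum_nat_const. apply sum_nat_le. intros e He. unfold l1.
      specialize (I1 e He). apply ln_le_mono; lra. }
    assert (Htau : INR tau * l1 <= INR m * l1 * Dv).
    { rewrite HDv. replace (INR m * l1 * (ln K / eps / l1)) with (INR m * (ln K / eps)) by (field; lra).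
      rewrite Hlnd in I3. lra. }
    assert (Htau' : INR tau <= INR m * Dv).
    { apply (Rmult_le_reg_r l1); [lra|]. lra. }
    assert (Hceil : Dv <= IZR (Rceil Dv)).
    { unfold Rceil. rewrite minus_IZR. destruct (archimed (- Dv)) as [_ H]. simpl IZR. lra. }
    pose proof (pos_INR m).
    assert (INR m * Dv <= INR m * IZR (Rceil Dv)) by (apply Rmult_le_compat_l; lra).
    fold Dv. lra.
  - intros [a [[_ Hamin] Ha1]]. fold Dv. split.
    + split.
      * intros pa Hpa. apply in_scale in Hpa. destruct Hpa as [pb [Hpb ->]].
        destruct (I4 pb Hpb) as [H1 H2]. simpl; split; auto.
        unfold Rdiv; apply Rmult_le_pos; [auto|left; apply Rinv_0_lt_compat; lra].
      * intros e He. rewrite edge_load_scale. specialize (I2 e He). pose proof (Hc e He).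
        specialize (I1 e He).
        assert (ln (ys tau e) < l1) by (unfold l1; apply ln_increasing; lra).
        assert (Hb : l1 * edge_load (xs tau) e / c e < l1 * Dv).
        { rewrite HDv. replace (l1 * (ln K / eps / l1)) with (ln K / eps) by (field; lra). lra. }
        assert (Hb2 : edge_load (xs tau) e < c e * Dv).
        { apply (Rmult_lt_reg_l (l1 / c e)). apply Rdiv_lt_0_compat; lra.
          replace (l1 / c e * edge_load (xs tau) e) with (l1 * edge_load (xs tau) e / c e) by (field; lra).
          replace (l1 / c e * (c e * Dv)) with (l1 * Dv) by (field; lra). lra. }
        apply (Rmult_le_reg_r Dv); [lra|]. unfold Rdiv; rewrite Rmult_assoc, Rinv_l by lra. lra.
    + rewrite flow_value_scale.
      destruct (Rle_lt_or_eq_dec 0 beta (beta_nonneg _ _ _ _ _ _ _ _ Hc Hopt)) as [Hb|Hb].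
      2:{ rewrite <- Hb. unfold Rdiv. rewrite Rmult_0_l. apply Rmult_le_pos; [auto|left; apply Rinv_0_lt_compat; lra]. }
      specialize (I6 Hb).
      assert (Hg := g_lemma m tl hd c s t L beta (ys tau) delta 1 Hc Hopt Hb Hdpos
                     ltac:(intros e He; apply I1; auto) ltac:(intros Q HQ; specialize (Hamin Q HQ); lra)).
      set (f := flow_value (xs tau)) in *.
      set (E := exp (eps * f / beta)) in *.
      assert (H1 : 1 <= INR L * delta * E).
      { apply (Rmult_le_reg_r beta); [lra|]. lra. }
      assert (HLd : 0 < INR L * delta) by nra.
      assert (H2 : 0 <= ln (INR L) + ln delta + eps * f / beta).
      { rewrite <- ln_1. replace (ln (INR L) + ln delta + eps * f / beta) with (ln (INR L * delta * E)).
        - apply ln_le_mono; lra.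
        - unfold E. rewrite ln_mult, ln_mult, ln_exp; [ring|lra|lra|lra|apply exp_pos]. }
      assert (HlnK' : ln K = l1 + ln (INR L)) by (unfold K, l1; rewrite ln_mult; lra).
      rewrite Hlnd in H2.
      assert (H3 : ln K * (1 - eps) / eps <= eps * f / beta).
      { replace (ln K * (1 - eps) / eps) with (ln K / eps - ln K) by (field; lra). lra. }
      assert (H4 : ln K * (1 - eps) * beta / (eps * eps) <= f).
      { apply (Rmult_le_compat_r (beta / eps)) in H3; [|left; apply Rdiv_lt_0_compat; lra].
        replace (eps * f / beta * (beta / eps)) with f in H3 by (field; lra).
        replace (ln K * (1 - eps) / eps * (beta / eps)) with (ln K * (1 - eps) * beta / (eps * eps)) in H3
          by (field; lra). exact H3. }
      assert (Hl1b : eps / (1 + eps) <= l1).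
      { pose proof (ln_ge (1 + eps) ltac:(lra)). fold l1 in H. replace (eps / (1 + eps)) with (1 - / (1 + eps)) by (field; lra). lra. }
      rewrite HDv.
      replace (f / (ln K / eps / l1)) with (f * (eps * l1 / ln K)) by (field; repeat split; lra).
      assert (Hpos : 0 < eps * l1 / ln K) by (apply Rdiv_lt_0_compat; nra).
      apply Rle_trans with (ln K * (1 - eps) * beta / (eps * eps) * (eps * l1 / ln K)).
      2:{ apply Rmult_le_compat_r; lra. }
      replace (ln K * (1 - eps) * beta / (eps * eps) * (eps * l1 / ln K)) with ((1 - eps) * beta / eps * l1)
        by (field; lra).
      apply Rle_trans with ((1 - eps) * beta / eps * (eps / (1 + eps))).
      2:{ apply Rmult_le_compat_l; [|exact Hl1b]. unfold Rdiv; apply Rmult_le_pos; [nra|left; apply Rinv_0_lt_compat; lra]. }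
      replace ((1 - eps) * beta / eps * (eps / (1 + eps))) with (beta * ((1 - eps) / (1 + eps))) by (field; lra).
      unfold Rdiv at 1. apply Rmult_le_compat_l; [lra|].
      apply (Rmult_le_reg_r ((1 + 3 * eps) * (1 + eps))); [nra|].
      replace (/ (1 + 3 * eps) * ((1 + 3 * eps) * (1 + eps))) with (1 + eps) by (field; lra).
      replace ((1 - eps) / (1 + eps) * ((1 + 3 * eps) * (1 + eps))) with ((1 - eps) * (1 + 3 * eps)) by (field; lra).
      nra.
Qed.
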